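(* Let $G$ be a LEF-group, $R$ a ring, $A$ an $R$-module, and $\sigma,\tau\in CA_{R\text{-mod}}(G,A)$. (1) If $A$ is a Noetherian $R$-module and $\tau$ is reversible, then $\tau^{-1}\in CA_{R\text{-mod}}(G,A)$. (2) If $\sigma\circ\tau=\mathrm{Id}$, then $\tau\circ\sigma=\mathrm{Id}$ in each of the following cases: (a) $A$ is a Noetherian $R$-module or an Artinian $R$-module; (b) $R$ is commutative and $A$ is a finitely generated $R$-module.
   Context: A group $G$ is LEF if every finite subset $S\subset G$ admits an injective map $\varphi\colon S\to H$ into some finite group $H$ with $\varphi(ab)=\varphi(a)\varphi(b)$ whenever $a,b,ab\in S$. $G$ acts on $A^G$ by $(gc)(h)=c(g^{-1}h)$; a cellular automaton is a map $\tau\colon A^G\to A^G$ with $(\tau(c))(g)=\mu((g^{-1}c)|_M)$ for some finite $M\subset G$ and map $\mu\colon A^M\to A$; it is reversible if it is bijective and its inverse is a cellular automaton. $CA_{R\text{-mod}}(G,A)$ is the set of cellular automata $\tau\colon A^G\to A^G$ admitting, for some finite memory set $M\subset G$, a local defining map $\mu\colon A^M\to A$ which is a homomorphism of $R$-modules. *)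

(* Defs.v *)
From HB Require Import structures.
From Stdlib Require List.
From mathcomp Require Import all_boot all_order all_algebra fingroup.
Set Implicit Arguments. Unset Strict Implicit. Unset Printing Implicit Defensive.
Import GRing.Theory.
Local Open Scope ring_scope.

Record Grp := MkGrp {
  gcar :> Type;
  gmul : gcar -> gcar -> gcar;
  gone : gcar;
  ginv : gcar -> gcar;
  gmulA : forall x y z, gmul x (gmul y z) = gmul (gmul x y) z;
  gmul1l : forall x, gmul gone x = x;
  gmulVl : forall x, gmul (ginv x) x = gone
}.

Definition LEF (G : Grp) : Prop :=
  forall S : list G, exists (H : finGroupType) (phi : G -> H),
    (forall a b, List.In a S -> List.In b S -> phi a = phi b -> a = b) /\
    (forall a b, List.In a S -> List.In b S -> List.In (gmul a b) S ->
       phi (gmul a b) = (phi a * phi b)%g).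

Definition gact (G : Grp) (A : Type) (g : G) (c : G -> A) : G -> A :=
  fun h => c (gmul (ginv g) h).

(* tau is a cellular automaton with finite memory set M = {m 0, ..., m (n-1)}
   (m injective) and local defining map mu : A^M -> A. *)
Definition is_CA_with (G : Grp) (A : Type) (n : nat) (m : 'I_n -> G)
    (mu : {ffun 'I_n -> A} -> A) (tau : (G -> A) -> (G -> A)) : Prop :=
  injective m /\
  forall c g, tau c g = mu [ffun i => gact (ginv g) c (m i)].

Definition is_CA (G : Grp) (A : Type) (tau : (G -> A) -> (G -> A)) : Prop :=
  exists n (m : 'I_n -> G) (mu : {ffun 'I_n -> A} -> A), is_CA_with m mu tau.

Definition reversible (G : Grp) (A : Type) (tau : (G -> A) -> (G -> A)) : Prop :=
  exists tau', cancel tau tau' /\ cancel tau' tau /\ is_CA tau'.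

Definition Rmod_hom (R : pzRingType) (A : lmodType R) (n : nat)
    (mu : {ffun 'I_n -> A} -> A) : Prop :=
  (forall x y, mu (x + y) = mu x + mu y) /\
  (forall (r : R) x, mu (r *: x) = r *: mu x).

Definition CA_Rmod (G : Grp) (R : pzRingType) (A : lmodType R)
    (tau : (G -> A) -> (G -> A)) : Prop :=
  exists n (m : 'I_n -> G) (mu : {ffun 'I_n -> A} -> A),
    is_CA_with m mu tau /\ Rmod_hom mu.

Definition submodule (R : pzRingType) (A : lmodType R) (N : A -> Prop) : Prop :=
  N 0 /\ (forall x y, N x -> N y -> N (x + y)) /\
  (forall (r : R) x, N x -> N (r *: x)).

Definition noetherian_module (R : pzRingType) (A : lmodType R) : Prop :=
  forall N : nat -> A -> Prop,
    (forall k, submodule (N k)) ->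
    (forall k x, N k x -> N k.+1 x) ->
    exists k0, forall k, (k0 <= k)%N -> forall x, N k x <-> N k0 x.

Definition artinian_module (R : pzRingType) (A : lmodType R) : Prop :=
  forall N : nat -> A -> Prop,
    (forall k, submodule (N k)) ->
    (forall k x, N k.+1 x -> N k x) ->
    exists k0, forall k, (k0 <= k)%N -> forall x, N k x <-> N k0 x.

Definition fin_gen_module (R : pzRingType) (A : lmodType R) : Prop :=
  exists s : seq A, forall x : A,
    exists c : 'I_(size s) -> R, x = \sum_(i < size s) c i *: s`_i.

(* Main.v *)
Require Import Defs.
From Stdlib Require List.
From HB Require Import structures.
From mathcomp Require Import all_boot all_order all_algebra fingroup.
Import GRing.Theory.
Local Open Scope ring_scope.
Set Warnings "-notation-overridden,-ambiguous-paths,-redundant-canonical-projection".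

Section Vasc.
Variable (R : pzRingType) (mulC : commutative (@GRing.mul R)) (nz : (1:R) != 0).
Definition Rc : Type := R.
HB.instance Definition _ := GRing.PzRing.on Rc.
HB.instance Definition _ := GRing.PzSemiRing_isNonZero.Build Rc nz.
HB.instance Definition _ := GRing.PzRing_hasCommutativeMul.Build Rc mulC.

Variable (M : lmodType R).
Variable (g : M -> M) (gD : forall x y, g (x + y) = g x + g y)
  (gZ : forall (r : R) x, g (r *: x) = r *: g x).

Lemma g0 : g 0 = 0.
Proof. by apply: (addrI (g 0)); rewrite -gD !addr0. Qed.

Lemma itD k x y : iter k g (x + y) = iter k g x + iter k g y.
Proof. by elim: k => //= k ->; rewrite gD. Qed.
Lemma itZ k (r : R) x : iter k g (r *: x) = r *: iter k g x.
Proof. by elim: k => //= k ->; rewrite gZ. Qed.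
Lemma it0 k : iter k g 0 = 0.
Proof. by elim: k => //= k ->; rewrite g0. Qed.
Lemma itsum k (I : Type) (r : seq I) (F : I -> M) :
  iter k g (\sum_(i <- r) F i) = \sum_(i <- r) iter k g (F i).
Proof. elim: r => [|a r IH]; rewrite ?big_nil ?it0 // !big_cons itD IH //. Qed.

Section Lsec.
Variable n : nat.
Definition L (P : 'M[Rc]_n) (w : 'I_n -> M) (i : 'I_n) : M :=
  \sum_j (P i j : R) *: w j.

Lemma L_ext P w1 w2 : (forall j, w1 j = w2 j) -> forall i, L P w1 i = L P w2 i.
Proof. by move=> E i; apply: eq_bigr => j _; rewrite E. Qed.

Lemma LM P Q w i : L (P *m Q) w i = L P (L Q w) i.
Proof.
rewrite /L; under eq_bigr do rewrite mxE scaler_suml.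
rewrite exchange_big /=; apply: eq_bigr => k _.
by rewrite scaler_sumr; apply: eq_bigr => j _; rewrite scalerA.
Qed.

Lemma L1 w i : L 1%:M w i = w i.
Proof.
rewrite /L (bigD1 i) //= big1 ?addr0; first by rewrite mxE eqxx /= scale1r.
by move=> j /negPf nj; rewrite mxE eq_sym nj /= scale0r.
Qed.

Lemma Lit k P w i : iter k g (L P w i) = L P (fun j => iter k g (w j)) i.
Proof. by rewrite /L itsum; apply: eq_bigr => j _; rewrite itZ. Qed.

Lemma Lsum (I : Type) (r : seq I) (F : I -> 'M[Rc]_n) w i :
  L (\sum_(k <- r) F k) w i = \sum_(k <- r) L (F k) w i.
Proof.
elim: r => [|a r IH]; rewrite ?big_nil ?big_cons.
  by rewrite /L big1 // => j _; rewrite mxE scale0r.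
by rewrite -IH /L -big_split /=; apply: eq_bigr => j _; rewrite mxE scalerDl.
Qed.

Lemma LZ (c : Rc) P w i : L (c *: P) w i = (c : R) *: L P w i.
Proof.
by rewrite /L scaler_sumr; apply: eq_bigr => j _; rewrite mxE scalerA.
Qed.
End Lsec.
Arguments L {n}.
Lemma vasc_nz (n : nat) (w : 'I_n -> M)
  (gen : forall x : M, exists c : 'I_n -> R, x = \sum_(i < n) c i *: w i)
  (gs : forall y, exists x, g x = y) :
  forall x, g x = 0 -> x = 0.
Proof.
move=> x gx0.
have [c xE] := gen x.
case: n w gen c xE => [|n'] w gen c xE.
  by rewrite xE big_ord0.
pose sv : 'I_n'.+1 -> M := w.
have hA : forall i : 'I_n'.+1, exists a : 'I_n'.+1 -> R,
    sv i = \sum_(j < n'.+1) a j *: g (sv j).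
  move=> i; have [y gy] := gs (sv i); have [a ya] := gen y.
  exists a; rewrite -gy ya; have /= -> := itsum 1.
  by apply: eq_bigr => j _; rewrite gZ.
have [af afE] := fin_all_exists hA.
pose A : 'M[Rc]_n'.+1 := \matrix_(i, j) af i j.
pose gk k := fun j : 'I_n'.+1 => iter k g (sv j).
have Lk : forall k i, L A (gk k.+1) i = gk k i.
  move=> k i; rewrite /gk afE itsum; apply: eq_bigr => j _.
  by rewrite mxE itZ -iterSr.
have Hk : forall k i, L (A ^+ k) (gk k) i = sv i.
  elim=> [|k IH] i; first by rewrite expr0 L1.
  rewrite exprSr LM -IH; apply: L_ext => j; exact: Lk.
set chi := char_poly A.
have CH := Cayley_Hamilton A.
have hchi : horner_mx A chi = \sum_(k < size chi) chi`_k *: A ^+ k.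
  rewrite -{1}(coefK chi) poly_def linear_sum; apply: eq_bigr => k _.
  by rewrite linearZ /= rmorphXn /= horner_mx_X.
have szchi : size chi = n'.+2 by rewrite size_char_poly.
have lead1 : chi`_n'.+1 = 1.
  have := char_poly_monic A; rewrite monicE lead_coefE szchi /=.
  by move/eqP.
pose T y := \sum_(k < n'.+2) (chi`_k : R) *: iter (n'.+1 - k) g y.
have Tsv : forall i, T (sv i) = 0.
  move=> i.
  have := congr1 (fun P => L P (gk n'.+1) i) CH.
  rewrite /= hchi szchi Lsum.
  have -> : L 0 (gk n'.+1) i = 0.
    by rewrite /L big1 // => j _; rewrite mxE scale0r.
  move=> <-; apply: eq_bigr => k _; rewrite LZ; congr (_ *: _).
  rewrite -(Hk k i) Lit; apply: L_ext => j.
  rewrite /gk -iterD subnK //; exact: (ltn_ord k).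
have TD : forall y z, T (y + z) = T y + T z.
  by move=> y z; rewrite /T -big_split; apply: eq_bigr => k _; rewrite itD scalerDr.
have TZ : forall (r : R) y, T (r *: y) = r *: T y.
  move=> r y; rewrite /T scaler_sumr; apply: eq_bigr => k _.
  by rewrite itZ !scalerA mulC.
have T0 : T 0 = 0 by rewrite /T big1 // => k _; rewrite it0 scaler0.
have Tx : T x = 0.
  rewrite xE; elim/big_rec: _ => [|j y _ Ty]; first by [].
  by rewrite TD TZ Ty addr0; have := Tsv j; rewrite /sv /= => ->; rewrite scaler0.
rewrite -Tx /T big_ord_recr /= subnn /= lead1 scale1r big1 ?add0r //.
move=> k _; rewrite subSn ?iterSr ?gx0 ?it0 ?scaler0 //.
by rewrite -ltnS.
Qed.
End Vasc.

Lemma vasconcelos (R : pzRingType) (mulC : commutative (@GRing.mul R))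
  (M : lmodType R) (n : nat) (w : 'I_n -> M)
  (gen : forall x : M, exists c : 'I_n -> R, x = \sum_(i < n) c i *: w i)
  (g : M -> M) (gD : forall x y, g (x + y) = g x + g y)
  (gZ : forall (r : R) x, g (r *: x) = r *: g x)
  (gs : forall y, exists x, g x = y) :
  forall x, g x = 0 -> x = 0.
Proof.
move=> x gx0; have [e|nz] := eqVneq (1 : R) 0.
  by rewrite -[x]scale1r e scale0r.
exact: (@vasc_nz R mulC nz M g gD gZ n w gen gs x gx0).
Qed.

Arguments g0 {R M g}. Arguments itD {R M g}. Arguments itZ {R M g}. Arguments it0 {R M g}. Arguments itsum {R M g}.
Section Mod.
Variable R : pzRingType.

Lemma chain_up (T : Type) (N : nat -> T -> Prop) :
  (forall k x, N k x -> N k.+1 x) -> forall k k' x, (k <= k')%N -> N k x -> N k' x.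
Proof.
move=> H k k' x /subnK <-; elim: (k' - k)%N => [|d IH] //= Nx.
by rewrite addSn; apply: H; apply: IH.
Qed.

Lemma chain_down (T : Type) (N : nat -> T -> Prop) :
  (forall k x, N k.+1 x -> N k x) -> forall k k' x, (k <= k')%N -> N k' x -> N k x.
Proof.
move=> H k k' x /subnK <-; elim: (k' - k)%N => [|d IH] //= Nx.
by apply: IH; apply: H; rewrite -addSn.
Qed.

Lemma noeth_surj_inj (M : lmodType R) : noetherian_module M ->
  forall g : M -> M, (forall x y, g (x + y) = g x + g y) ->
  (forall (r : R) x, g (r *: x) = r *: g x) ->
  (forall y, exists x, g x = y) -> forall x, g x = 0 -> x = 0.
Proof.
move=> NM g gD gZ gs x gx0.
pose N k (x : M) := iter k g x = 0.
have [||k0 Hk0] := NM N.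
- move=> k; split; first exact: (it0 gD).
  split; first by move=> a b; rewrite /N (itD gD) => -> ->; rewrite addr0.
  by move=> r a; rewrite /N (itZ gZ) => ->; rewrite scaler0.
- by move=> k a; rewrite /N /= => ->; rewrite (g0 gD).
have its : forall k y, exists z, iter k g z = y.
  elim=> [|k IH] y; first by exists y.
  have [z gz] := gs y; have [u hu] := IH z; exists u; by rewrite /= hu.
have [y hy] := its k0 x.
have : N k0 y by apply/(Hk0 k0.+1 (leqnSn _)); rewrite /N /= hy.
by rewrite /N hy.
Qed.

Lemma iter_inj (T : Type) (f : T -> T) : injective f -> forall k, injective (iter k f).
Proof. by move=> fi; elim=> [|k IH] a b //= /fi /IH. Qed.

Lemma art_inj_surj (M : lmodType R) : artinian_module M ->
  forall f : M -> M, (forall x y, f (x + y) = f x + f y) ->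
  (forall (r : R) x, f (r *: x) = r *: f x) ->
  injective f -> forall y, exists x, f x = y.
Proof.
move=> AM f fD fZ fi y.
pose N k (x : M) := exists z, x = iter k f z.
have [||k0 Hk0] := AM N.
- move=> k; split; first by exists 0; rewrite (it0 fD).
  split; first by move=> a b [za ->] [zb ->]; exists (za + zb); rewrite (itD fD).
  by move=> r a [za ->]; exists (r *: za); rewrite (itZ fZ).
- by move=> k a [z ->]; exists (f z); rewrite iterSr.
have : N k0.+1 (iter k0 f y) by apply/(Hk0 k0.+1 (leqnSn _)); exists y.
case=> z; rewrite iterSr => /(@iter_inj _ _ fi) ->; by exists z.
Qed.

Variable A : lmodType R.

Lemma ffun_noeth (H : finType) : noetherian_module A -> noetherian_module {ffun H -> A}.
Proof.
move=> NA.
suff aux : forall l : seq H, forall N : nat -> {ffun H -> A} -> Prop,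
  (forall k, submodule (N k)) -> (forall k x, N k x -> N k.+1 x) ->
  (forall k f, N k f -> forall x, x \notin l -> f x = 0) ->
  exists k0, forall k, (k0 <= k)%N -> forall f, N k f <-> N k0 f.
  move=> N sN iN; apply: (aux (enum H)) => // k f _ x; by rewrite mem_enum.
elim=> [|h l IH] N sN iN supp.
  exists 0%N => k _ f.
  have z : forall k f, N k f -> f = 0.
    by move=> k' f' Nf; apply/ffunP => x; rewrite ffunE (supp k' f' Nf).
  split=> Nf; rewrite (z _ _ Nf); [exact: (sN 0%N).1 | exact: (sN k).1].
pose P k (a : A) := exists f, N k f /\ f h = a.
have [||k1 Hk1] := NA P.
- move=> k; have [N0 [ND NZ]] := sN k; split; first by exists 0; rewrite ffunE.
  split; first by move=> a b [fa [Na <-]] [fb [Nb <-]]; exists (fa + fb); rewrite ffunE; split => //; apply: ND.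
  by move=> r a [fa [Na <-]]; exists (r *: fa); rewrite ffunE; split => //; apply: NZ.
- by move=> k a [f [Nf <-]]; exists f; split => //; apply: iN.
pose Q k (f : {ffun H -> A}) := N k f /\ f h = 0.
have [|||k2 Hk2] := IH Q.
- move=> k; have [N0 [ND NZ]] := sN k; split; first by split => //; rewrite ffunE.
  split; first by move=> a b [Na ha] [Nb hb]; split; [apply: ND | rewrite ffunE ha hb addr0].
  by move=> r a [Na ha]; split; [apply: NZ | rewrite ffunE ha scaler0].
- by move=> k a [Na ha]; split => //; apply: iN.
- move=> k f [Nf hf] x xl; case: (eqVneq x h) => [->|xh] //.
  by apply: (supp k f Nf); rewrite inE negb_or xh xl.
exists (maxn k1 k2) => k hk f; split; last first.
  by apply: chain_up hk.
move=> Nf.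
have hk1 : (k1 <= k)%N by apply: leq_trans hk; rewrite leq_maxl.
have hk2 : (k2 <= k)%N by apply: leq_trans hk; rewrite leq_maxr.
have : P (maxn k1 k2) (f h).
  by apply/(Hk1 _ (leq_maxl _ _))/(Hk1 _ hk1); exists f.
case=> g [Ng gh].
have Ngk : N k g by apply: chain_up Ng.
have Qfg : Q k (f + (-1) *: g).
  have [_ [ND NZ]] := sN k; split; first by apply: ND => //; apply: NZ.
  by rewrite !ffunE gh scaleN1r subrr.
have : N (maxn k1 k2) (f + (-1) *: g).
  exact: (proj2 (Hk2 _ (leq_maxr _ _) _) (proj1 (Hk2 _ hk2 _) Qfg)).1.
have [_ [ND NZ]] := sN (maxn k1 k2).
move=> Nd; have := ND _ _ Nd Ng.
by rewrite scaleN1r addrNK.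
Qed.

Lemma ffun_art (H : finType) : artinian_module A -> artinian_module {ffun H -> A}.
Proof.
move=> NA.
suff aux : forall l : seq H, forall N : nat -> {ffun H -> A} -> Prop,
  (forall k, submodule (N k)) -> (forall k x, N k.+1 x -> N k x) ->
  (forall k f, N k f -> forall x, x \notin l -> f x = 0) ->
  exists k0, forall k, (k0 <= k)%N -> forall f, N k f <-> N k0 f.
  move=> N sN iN; apply: (aux (enum H)) => // k f _ x; by rewrite mem_enum.
elim=> [|h l IH] N sN iN supp.
  exists 0%N => k _ f.
  have z : forall k f, N k f -> f = 0.
    by move=> k' f' Nf; apply/ffunP => x; rewrite ffunE (supp k' f' Nf).
  split=> Nf; rewrite (z _ _ Nf); [exact: (sN 0%N).1 | exact: (sN k).1].
pose P k (a : A) := exists f, N k f /\ f h = a.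
have [||k1 Hk1] := NA P.
- move=> k; have [N0 [ND NZ]] := sN k; split; first by exists 0; rewrite ffunE.
  split; first by move=> a b [fa [Na <-]] [fb [Nb <-]]; exists (fa + fb); rewrite ffunE; split => //; apply: ND.
  by move=> r a [fa [Na <-]]; exists (r *: fa); rewrite ffunE; split => //; apply: NZ.
- by move=> k a [f [Nf <-]]; exists f; split => //; apply: iN.
pose Q k (f : {ffun H -> A}) := N k f /\ f h = 0.
have [|||k2 Hk2] := IH Q.
- move=> k; have [N0 [ND NZ]] := sN k; split; first by split => //; rewrite ffunE.
  split; first by move=> a b [Na ha] [Nb hb]; split; [apply: ND | rewrite ffunE ha hb addr0].
  by move=> r a [Na ha]; split; [apply: NZ | rewrite ffunE ha scaler0].
- by move=> k a [Na ha]; split => //; apply: iN.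
- move=> k f [Nf hf] x xl; case: (eqVneq x h) => [->|xh] //.
  by apply: (supp k f Nf); rewrite inE negb_or xh xl.
exists (maxn k1 k2) => k hk f; split.
  by apply: chain_down hk.
move=> Nf.
have hk1 : (k1 <= k)%N by apply: leq_trans hk; rewrite leq_maxl.
have hk2 : (k2 <= k)%N by apply: leq_trans hk; rewrite leq_maxr.
have : P k (f h).
  apply: (proj2 (Hk1 _ hk1 _)); apply: (proj1 (Hk1 _ (leq_maxl k1 k2) _)); by exists f; split.
case=> g [Ng gh].
have Ngk : N (maxn k1 k2) g by apply: chain_down Ng.
have Qfg : Q (maxn k1 k2) (f + (-1) *: g).
  have [_ [ND NZ]] := sN (maxn k1 k2); split; first by apply: ND => //; apply: NZ.
  by rewrite !ffunE gh scaleN1r subrr.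
have : N k (f + (-1) *: g).
  exact: (proj2 (Hk2 _ hk2 _) (proj1 (Hk2 _ (leq_maxr _ _) _) Qfg)).1.
have [_ [ND NZ]] := sN k.
move=> Nd; have := ND _ _ Nd Ng.
by rewrite scaleN1r addrNK.
Qed.

End Mod.

Arguments noeth_surj_inj {R M}. Arguments art_inj_surj {R M}.
Arguments ffun_noeth {R A H}. Arguments ffun_art {R A H}.

Section Mod2.
Variable R : pzRingType.

Definition spans (M : lmodType R) :=
  exists n (w : 'I_n -> M), forall x, exists c : 'I_n -> R, x = \sum_(i < n) c i *: w i.

Lemma span_ord (M : lmodType R) (I : finType) (v : I -> M) :
  (forall x, exists c : I -> R, x = \sum_i c i *: v i) -> spans M.
Proof.
move=> h; exists #|I|, (fun i => v (enum_val i)) => x.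
have [c ->] := h x; exists (fun i => c (enum_val i)).
rewrite (reindex (fun i : 'I_#|I| => enum_val i)) //.
by exists enum_rank => i _; rewrite ?enum_valK ?enum_rankK.
Qed.

Lemma fg_spans (A : lmodType R) : fin_gen_module A -> spans A.
Proof. by case=> s h; exists (size s), (fun i => s`_i). Qed.

Lemma ffun_spans (A : lmodType R) (H : finType) : spans A -> spans {ffun H -> A}.
Proof.
case=> n [w gen].
pose v (p : H * 'I_n) : {ffun H -> A} := [ffun x => if x == p.1 then w p.2 else 0].
apply: (@span_ord _ _ v) => F.
have [cf cfE] := fin_all_exists (fun h => gen (F h)).
exists (fun p => cf p.1 p.2); apply/ffunP => y.
rewrite sum_ffunE -(pair_bigA _ (fun h i => (cf h i *: v (h, i)) y)) /=.
rewrite (bigD1 y) //= [X in _ + X]big1 ?addr0.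
  rewrite cfE; apply: eq_bigr => i _; by rewrite !ffunE /= eqxx.
move=> h hy; apply: big1 => i _; rewrite !ffunE /=.
by rewrite eq_sym (negPf hy) scaler0.
Qed.

Lemma dfin (M : lmodType R) (f g : M -> M)
  (fD : forall x y, f (x + y) = f x + f y) (fZ : forall (r : R) x, f (r *: x) = r *: f x)
  (gD : forall x y, g (x + y) = g x + g y) (gZ : forall (r : R) x, g (r *: x) = r *: g x)
  (gf : forall x, g (f x) = x)
  (hyp : noetherian_module M \/ artinian_module M \/
         (commutative (@GRing.mul R) /\ spans M)) :
  forall x, f (g x) = x.
Proof.
have gs : forall y, exists x, g x = y by move=> y; exists (f y).
have gB : forall a b, g (a - b) = g a - g b.
  by move=> a b; rewrite -scaleN1r gD gZ scaleN1r.
have fin : forall (ker : forall x, g x = 0 -> x = 0), forall x, f (g x) = x.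
  move=> ker x; apply/eqP; rewrite -subr_eq0; apply/eqP; apply: ker.
  by rewrite gB gf subrr.
case: hyp => [NM | [AM | [mulC [n [w gen]]]]].
- exact: fin (noeth_surj_inj NM g gD gZ gs).
- have fi : injective f by move=> a b e; rewrite -(gf a) e gf.
  by move=> x; have [y <-] := art_inj_surj AM f fD fZ fi x; rewrite gf.
- apply: fin; exact: (@vasconcelos _ mulC _ _ _ gen _ gD gZ gs).
Qed.
End Mod2.
Arguments spans {R}.

From Stdlib Require Import FunctionalExtensionality ClassicalEpsilon.

Section Grp.
Variable G : Grp.
Implicit Types x y : G.
Lemma gmulV x : gmul x (ginv x) = gone G.
Proof.
have e : gmul x (ginv x) = gmul (gmul (ginv (ginv x)) (ginv x)) (gmul x (ginv x)).
  by rewrite gmulVl gmul1l.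
by rewrite e -gmulA [gmul (ginv x) (gmul x (ginv x))]gmulA gmulVl gmul1l gmulVl.
Qed.
Lemma gmul1r x : gmul x (gone G) = x.
Proof. by rewrite -(gmulVl x) gmulA gmulV gmul1l. Qed.
Lemma ginvK x : ginv (ginv x) = x.
Proof.
transitivity (gmul (ginv (ginv x)) (gone G)); first by rewrite gmul1r.
by rewrite -(gmulVl x) gmulA gmulVl gmul1l.
Qed.
End Grp.

Section CA.
Variables (G : Grp) (R : pzRingType) (A : lmodType R).

Lemma CA_eval n (m : 'I_n -> G) (mu : {ffun 'I_n -> A} -> A) tau :
  is_CA_with m mu tau -> forall c g, tau c g = mu [ffun i => c (gmul g (m i))].
Proof.
by case=> _ h c g; rewrite h; congr mu; apply/ffunP => i; rewrite !ffunE /gact ginvK.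
Qed.

Lemma part1 (tau tau_inv : (G -> A) -> (G -> A)) :
  CA_Rmod tau -> reversible tau -> cancel tau tau_inv -> CA_Rmod tau_inv.
Proof.
case=> n [m [mu [tauCA [muD muZ]]]] [tau' [c1 [c2 [n' [m' [mu' tau'CA]]]]]] ci.
have inv : forall c, tau_inv c = tau' c by move=> c; rewrite -{1}(c2 c) ci.
have tD : forall c d, tau (fun h => c h + d h) = (fun h => tau c h + tau d h).
  move=> c d; apply: functional_extensionality => g.
  rewrite !(@CA_eval _ _ _ _ tauCA) -muD; congr mu; apply/ffunP => i; by rewrite !ffunE.
have tZ : forall (r : R) c, tau (fun h => r *: c h) = (fun h => r *: tau c h).
  move=> r c; apply: functional_extensionality => g.
  rewrite !(@CA_eval _ _ _ _ tauCA) -muZ; congr mu; apply/ffunP => i; by rewrite !ffunE.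
have t'D : forall c d, tau' (fun h => c h + d h) = (fun h => tau' c h + tau' d h).
  by move=> c d; rewrite -[RHS]c1 tD !c2.
have t'Z : forall (r : R) c, tau' (fun h => r *: c h) = (fun h => r *: tau' c h).
  by move=> r c; rewrite -[RHS]c1 tZ !c2.
pose e (x : {ffun 'I_n' -> A}) (h : G) : A :=
  \sum_(i < n') (if excluded_middle_informative (m' i = h) then x i else 0).
have eE : forall x j, e x (m' j) = x j.
  move=> x j; rewrite /e (bigD1 j) //= big1 ?addr0.
    by case: excluded_middle_informative.
  move=> i ij; case: excluded_middle_informative => // eq.
  have eij := proj1 tau'CA _ _ eq.
  by rewrite eij eqxx in ij.
have mu'E : forall x, mu' x = tau' (e x) (gone G).
  move=> x; rewrite (@CA_eval _ _ _ _ tau'CA); congr mu'; apply/ffunP => i.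
  by rewrite ffunE gmul1l eE.
have eD : forall x y, e (x + y) = (fun h => e x h + e y h).
  move=> x y; apply: functional_extensionality => h; rewrite /e -big_split.
  apply: eq_bigr => i _; case: excluded_middle_informative => ?.
    by rewrite /= ffunE.
  by rewrite /= addr0.
have eZ : forall (r : R) x, e (r *: x) = (fun h => r *: e x h).
  move=> r x; apply: functional_extensionality => h; rewrite /e scaler_sumr.
  apply: eq_bigr => i _; case: excluded_middle_informative => ?.
    by rewrite /= ffunE.
  by rewrite /= scaler0.
exists n', m', mu'; split.
  split; first exact: (proj1 tau'CA).
  by move=> c g; rewrite inv; exact: (proj2 tau'CA).
split.
  by move=> x y; rewrite !mu'E eD t'D.
by move=> r x; rewrite !mu'E eZ t'Z.
Qed.
End CA.

Lemma In_mem (T : eqType) (x : T) (s : seq T) : x \in s -> List.In x s.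
Proof.
elim: s => //= a s IH; rewrite in_cons => /orP [/eqP ->|xs]; [by left | right; exact: IH].
Qed.

Section CA2.
Variables (G : Grp) (R : pzRingType) (A : lmodType R).

Lemma part2 (sigma tau : (G -> A) -> (G -> A)) :
  LEF G -> CA_Rmod sigma -> CA_Rmod tau ->
  (forall c, sigma (tau c) = c) ->
   (noetherian_module A \/ artinian_module A \/
    ((forall x y : R, (x * y = y * x)%R) /\ fin_gen_module A)) ->
   forall c, tau (sigma c) = c.
Proof.
move=> lef [n1 [m1 [mu1 [sCA [mu1D mu1Z]]]]] [n2 [m2 [mu2 [tCA [mu2D mu2Z]]]]] st hyp c.
pose e1 := enum 'I_n1. pose e2 := enum 'I_n2.
pose S : list G := gone G :: (List.map m1 e1 ++ List.map m2 e2 ++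
  List.flat_map (fun i => List.map (fun j => gmul (m1 i) (m2 j)) e2) e1 ++
  List.flat_map (fun j => List.map (fun i => gmul (m2 j) (m1 i)) e1) e2).
have i1 : forall i : 'I_n1, List.In i e1 by move=> i; apply: In_mem; rewrite mem_enum.
have i2 : forall i : 'I_n2, List.In i e2 by move=> i; apply: In_mem; rewrite mem_enum.
have S1 : List.In (gone G) S by left.
have Sm1 : forall i, List.In (m1 i) S.
  by move=> i; right; apply: List.in_or_app; left; apply: List.in_map.
have Sm2 : forall i, List.In (m2 i) S.
  move=> i; right; apply: List.in_or_app; right; apply: List.in_or_app; left.
  by apply: List.in_map.
have S12 : forall i j, List.In (gmul (m1 i) (m2 j)) S.
  move=> i j; right; apply: List.in_or_app; right; apply: List.in_or_app; right.
  apply: List.in_or_app; left; apply/List.in_flat_map; exists i; split => //.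
  by apply: (List.in_map (fun j => gmul (m1 i) (m2 j))).
have S21 : forall j i, List.In (gmul (m2 j) (m1 i)) S.
  move=> j i; right; apply: List.in_or_app; right; apply: List.in_or_app; right.
  apply: List.in_or_app; right; apply/List.in_flat_map; exists j; split => //.
  by apply: (List.in_map (fun i => gmul (m2 j) (m1 i))).
have [H [phi [phiI phiM]]] := lef S.
have phi1 : phi (gone G) = 1%g.
  have := phiM _ _ S1 S1; rewrite gmul1l => /= e.
  by apply: (@mulgI _ (phi (gone G))); rewrite mulg1 -e.
pose sH (d : {ffun H -> A}) : {ffun H -> A} :=
  [ffun h => mu1 [ffun i => d (h * phi (m1 i))%g]].
pose tH (d : {ffun H -> A}) : {ffun H -> A} :=
  [ffun h => mu2 [ffun j => d (h * phi (m2 j))%g]].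
have sHD : forall x y, sH (x + y) = sH x + sH y.
  move=> x y; apply/ffunP => h; rewrite !ffunE -mu1D; congr mu1.
  by apply/ffunP => i; rewrite !ffunE.
have sHZ : forall (r : R) x, sH (r *: x) = r *: sH x.
  move=> r x; apply/ffunP => h; rewrite !ffunE -mu1Z; congr mu1.
  by apply/ffunP => i; rewrite !ffunE.
have tHD : forall x y, tH (x + y) = tH x + tH y.
  move=> x y; apply/ffunP => h; rewrite !ffunE -mu2D; congr mu2.
  by apply/ffunP => i; rewrite !ffunE.
have tHZ : forall (r : R) x, tH (r *: x) = r *: tH x.
  move=> r x; apply/ffunP => h; rewrite !ffunE -mu2Z; congr mu2.
  by apply/ffunP => i; rewrite !ffunE.
have sHtH : forall d, sH (tH d) = d.
  move=> d; apply/ffunP => h; rewrite ffunE.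
  pose X := fun g => d (h * phi g)%g.
  transitivity (sigma (tau X) (gone G)).
    rewrite (@CA_eval _ _ _ _ _ _ _ sCA); congr mu1; apply/ffunP => i.
    rewrite !ffunE (@CA_eval _ _ _ _ _ _ _ tCA) gmul1l; congr mu2; apply/ffunP => j.
    by rewrite !ffunE /X (phiM _ _ (Sm1 i) (Sm2 j) (S12 i j)) mulgA.
  by rewrite st /X phi1 mulg1.
have hyp' : noetherian_module {ffun H -> A} \/ artinian_module {ffun H -> A} \/
    (commutative (@GRing.mul R) /\ spans {ffun H -> A}).
  case: hyp => [NA | [AA | [mC fg]]].
  - by left; apply: ffun_noeth.
  - by right; left; apply: ffun_art.
  - by right; right; split => //; apply: ffun_spans; apply: fg_spans.
have tHsH := @dfin _ _ _ _ tHD tHZ sHD sHZ sHtH hyp'.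
apply: functional_extensionality => g0.
pose d : {ffun H -> A} := [ffun y =>
  match excluded_middle_informative (exists x, List.In x S /\ phi x = y) with
  | left ex => c (gmul g0 (proj1_sig (constructive_indefinite_description _ ex)))
  | right _ => 0 end].
have dE : forall x, List.In x S -> d (phi x) = c (gmul g0 x).
  move=> x xS; rewrite ffunE; case: excluded_middle_informative => [ex|nex]; last first.
    by exfalso; apply: nex; exists x.
  case: (constructive_indefinite_description _ ex) => x' [x'S ex'] /=.
  by rewrite (phiI _ _ x'S xS ex').
clearbody d.
transitivity (tH (sH d) 1%g).
  rewrite (@CA_eval _ _ _ _ _ _ _ tCA) ffunE; congr mu2; apply/ffunP => j.
  rewrite !ffunE (@CA_eval _ _ _ _ _ _ _ sCA); congr mu1; apply/ffunP => i.
  rewrite !ffunE mul1g -(phiM _ _ (Sm2 j) (Sm1 i) (S21 j i)) (dE _ (S21 j i)).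
  by rewrite gmulA.
by rewrite tHsH -phi1 (dE _ S1) gmul1r.
Qed.
End CA2.

Theorem corollary7p1 (G : Grp) (R : pzRingType) (A : lmodType R)
    (sigma tau : (G -> A) -> (G -> A)) :
  LEF G -> CA_Rmod sigma -> CA_Rmod tau ->
  (* (1) *)
  (noetherian_module A -> reversible tau ->
     forall tau_inv, cancel tau tau_inv -> CA_Rmod tau_inv) /\
  (* (2) *)
  ((forall c, sigma (tau c) = c) ->
   (noetherian_module A \/ artinian_module A \/
    ((forall x y : R, (x * y = y * x)%R) /\ fin_gen_module A)) ->
   forall c, tau (sigma c) = c).
Proof.
move=> lef sCA tCA; split.
  by move=> _ rev tau_inv ci; exact: part1 tCA rev ci.
exact: part2 lef sCA tCA.
Qed.
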